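(* For all $0<|t|<\pi/2$, \[ \frac{\pi^2+\frac{28-8\pi}{\pi}t^2+\frac{16\pi-48}{\pi^3}t^4}{\pi^2-4t^2}<\sec t<\frac{\pi^2-\frac{8-\pi^2}{2}t^2-\frac{4\pi^3-128}{2\pi^3}t^4}{\pi^2-4t^2}. \] *)

(* Defs.v *)
From Stdlib Require Import Reals Lra.
Open Scope R_scope.

Definition sec (t : R) : R := / cos t.

(* Main.v *)
Require Import Defs.
From Stdlib Require Import Reals Lra Arith.
Open Scope R_scope.
Lemma mb r e h E i j : 0 <= r <= h -> 0 <= e <= E -> 0 <= r^i * e^j <= h^i * E^j.
Proof.
  intros [Hr1 Hr2] [He1 He2]. split.
  - apply Rmult_le_pos; apply pow_le; lra.
  - apply Rmult_le_compat; try (apply pow_le; lra); apply pow_incr; lra.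
Qed.
Definition QA1 (u p : R) : R := (28)*p^2 + (-4)*p^3 + (-1/2)*p^5 + (-48)*u^1 + (16)*u^1*p^1 + (-14)*u^1*p^2 + (4)*u^1*p^3 + (1/24)*u^1*p^5 + (24)*u^2 + (-8)*u^2*p^1 + (7/6)*u^2*p^2 + (-1/3)*u^2*p^3 + (-1/720)*u^2*p^5 + (-2)*u^3 + (2/3)*u^3*p^1 + (-7/180)*u^3*p^2 + (1/90)*u^3*p^3 + (1/40320)*u^3*p^5 + (1/15)*u^4 + (-1/45)*u^4*p^1 + (1/1440)*u^4*p^2 + (-1/5040)*u^4*p^3 + (-1/840)*u^5 + (1/2520)*u^5*p^1.
Definition QA1E (u e : R) : R := (-42802627973791643/64000000000000000) + (-1190388911535921/6400000000000)*e^1 + (-263545067187/1600000000)*e^2 + (-42676089/800000)*e^3 + (-6283/800)*e^4 + (-1/2)*e^5 + (661065317797791643/768000000000000000)*u^1 + (5126970908335921/76800000000000)*u^1*e^1 + (703029867187/19200000000)*u^1*e^2 + (77876089/9600000)*u^1*e^3 + (6283/9600)*u^1*e^4 + (1/24)*u^1*e^5 + (-8700284369509791643/23040000000000000000)*u^2 + (-25839884866735921/2304000000000000)*u^2*e^1 + (-1385532267187/576000000000)*u^2*e^2 + (-135476089/288000000)*u^2*e^3 + (-6283/288000)*u^2*e^4 + (-1/720)*u^2*e^5 + (80782420333093791643/1290240000000000000000)*u^3 + (10943719077281769/14336000000000000)*u^3*e^1 + (790456355729/10752000000000)*u^3*e^2 + (218676089/16128000000)*u^3*e^3 + (6283/16128000)*u^3*e^4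 + (1/40320)*u^3*e^5 + (-98479644187/40320000000000)*u^4 + (-478466267/20160000000)*u^4*e^1 + (-11849/10080000)*u^4*e^2 + (-1/5040)*u^4*e^3 + (283/5040000)*u^5 + (1/2520)*u^5*e^1.
Lemma QA1E_eq u p : QA1 u p = QA1E u (p - (6283/2000)).
Proof. unfold QA1, QA1E; lra. Qed.
Definition QA1_0 (r e : R) : R := (-42802627973791643/64000000000000000) + (-1190388911535921/6400000000000)*e^1 + (-263545067187/1600000000)*e^2 + (-42676089/800000)*e^3 + (-6283/800)*e^4 + (-1/2)*e^5 + (661065317797791643/768000000000000000)*r^1 + (5126970908335921/76800000000000)*r^1*e^1 + (703029867187/19200000000)*r^1*e^2 + (77876089/9600000)*r^1*e^3 + (6283/9600)*r^1*e^4 + (1/24)*r^1*e^5 + (-8700284369509791643/23040000000000000000)*r^2 + (-25839884866735921/2304000000000000)*r^2*e^1 + (-1385532267187/576000000000)*r^2*e^2 + (-135476089/288000000)*r^2*e^3 + (-6283/288000)*r^2*e^4 + (-1/720)*r^2*e^5 + (80782420333093791643/1290240000000000000000)*r^3 + (10943719077281769/14336000000000000)*r^3*e^1 + (790456355729/10752000000000)*r^3*e^2 + (218676089/16128000000)*r^3*e^3 + (6283/16128000)*r^3*e^4 + (1/40320)*r^3*e^5 + (-98479644187/40320000000000)*r^4 + (-478466267/20160000000)*r^4*e^1 + (-11849/10080000)*r^4*e^2 + (-1/5040)*r^4*e^3 + (283/5040000)*r^5 + (1/2520)*r^5*e^1.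
Lemma QA1_0_sign r e : 0 <= r <= (1/2) -> 0 <= e <= (1/10000) -> QA1_0 r e < 0.
Proof.
  intros Hr He.
  pose proof (mb r e (1/2) (1/10000) 0 1 Hr He).
  pose proof (mb r e (1/2) (1/10000) 0 2 Hr He).
  pose proof (mb r e (1/2) (1/10000) 0 3 Hr He).
  pose proof (mb r e (1/2) (1/10000) 0 4 Hr He).
  pose proof (mb r e (1/2) (1/10000) 0 5 Hr He).
  pose proof (mb r e (1/2) (1/10000) 1 0 Hr He).
  pose proof (mb r e (1/2) (1/10000) 1 1 Hr He).
  pose proof (mb r e (1/2) (1/10000) 1 2 Hr He).
  pose proof (mb r e (1/2) (1/10000) 1 3 Hr He).
  pose proof (mb r e (1/2) (1/10000) 1 4 Hr He).
  pose proof (mb r e (1/2) (1/10000) 1 5 Hr He).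
  pose proof (mb r e (1/2) (1/10000) 2 0 Hr He).
  pose proof (mb r e (1/2) (1/10000) 2 1 Hr He).
  pose proof (mb r e (1/2) (1/10000) 2 2 Hr He).
  pose proof (mb r e (1/2) (1/10000) 2 3 Hr He).
  pose proof (mb r e (1/2) (1/10000) 2 4 Hr He).
  pose proof (mb r e (1/2) (1/10000) 2 5 Hr He).
  pose proof (mb r e (1/2) (1/10000) 3 0 Hr He).
  pose proof (mb r e (1/2) (1/10000) 3 1 Hr He).
  pose proof (mb r e (1/2) (1/10000) 3 2 Hr He).
  pose proof (mb r e (1/2) (1/10000) 3 3 Hr He).
  pose proof (mb r e (1/2) (1/10000) 3 4 Hr He).
  pose proof (mb r e (1/2) (1/10000) 3 5 Hr He).
  pose proof (mb r e (1/2) (1/10000) 4 0 Hr He).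
  pose proof (mb r e (1/2) (1/10000) 4 1 Hr He).
  pose proof (mb r e (1/2) (1/10000) 4 2 Hr He).
  pose proof (mb r e (1/2) (1/10000) 4 3 Hr He).
  pose proof (mb r e (1/2) (1/10000) 5 0 Hr He).
  pose proof (mb r e (1/2) (1/10000) 5 1 Hr He).
  unfold QA1_0; lra.
Qed.
Lemma QA1_0_eq u e : QA1E u e = QA1_0 (u - (0)) e.
Proof. unfold QA1E, QA1_0; lra. Qed.
Definition QA1_1 (r e : R) : R := (-1118685298456983738151/3440640000000000000000) + (-53443257024643078997/344064000000000000)*e^1 + (-1806334044365737/12288000000000)*e^2 + (-708269840191/14336000000)*e^3 + (-323932631/43008000)*e^4 + (-51557/107520)*e^5 + (2729630360602279887857/5160960000000000000000)*r^1 + (28954530340737550579/516096000000000000)*r^1*e^1 + (4421039753248313/129024000000000)*r^1*e^2 + (54847811379/7168000000)*r^1*e^3 + (40833217/64512000)*r^1*e^4 + (6499/161280)*r^1*e^5 + (-247119171409255763029/860160000000000000000)*r^2 + (-2607645242314215389/258048000000000000)*r^2*e^1 + (-148179257123383/64512000000000)*r^2*e^2 + (-14526893701/32256000000)*r^2*e^3 + (-684847/32256000)*r^2*e^4 + (-109/80640)*r^2*e^5 + (74660843105125791643/1290240000000000000000)*r^3 + (92497103477935921/129024000000000000)*r^3*e^1 + (2295535467187/32256000000000)*r^3*e^2 + (212276089/16128000000)*r^3*e^3 + (6283/16128000)*r^3*e^4 + (1/40320)*r^3*e^5 + (-92819644187/40320000000000)*r^4 + (-21831727/960000000)*r^4*e^1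 + (-11849/10080000)*r^4*e^2 + (-1/5040)*r^4*e^3 + (283/5040000)*r^5 + (1/2520)*r^5*e^1.
Lemma QA1_1_sign r e : 0 <= r <= (1/2) -> 0 <= e <= (1/10000) -> QA1_1 r e < 0.
Proof.
  intros Hr He.
  pose proof (mb r e (1/2) (1/10000) 0 1 Hr He).
  pose proof (mb r e (1/2) (1/10000) 0 2 Hr He).
  pose proof (mb r e (1/2) (1/10000) 0 3 Hr He).
  pose proof (mb r e (1/2) (1/10000) 0 4 Hr He).
  pose proof (mb r e (1/2) (1/10000) 0 5 Hr He).
  pose proof (mb r e (1/2) (1/10000) 1 0 Hr He).
  pose proof (mb r e (1/2) (1/10000) 1 1 Hr He).
  pose proof (mb r e (1/2) (1/10000) 1 2 Hr He).
  pose proof (mb r e (1/2) (1/10000) 1 3 Hr He).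
  pose proof (mb r e (1/2) (1/10000) 1 4 Hr He).
  pose proof (mb r e (1/2) (1/10000) 1 5 Hr He).
  pose proof (mb r e (1/2) (1/10000) 2 0 Hr He).
  pose proof (mb r e (1/2) (1/10000) 2 1 Hr He).
  pose proof (mb r e (1/2) (1/10000) 2 2 Hr He).
  pose proof (mb r e (1/2) (1/10000) 2 3 Hr He).
  pose proof (mb r e (1/2) (1/10000) 2 4 Hr He).
  pose proof (mb r e (1/2) (1/10000) 2 5 Hr He).
  pose proof (mb r e (1/2) (1/10000) 3 0 Hr He).
  pose proof (mb r e (1/2) (1/10000) 3 1 Hr He).
  pose proof (mb r e (1/2) (1/10000) 3 2 Hr He).
  pose proof (mb r e (1/2) (1/10000) 3 3 Hr He).
  pose proof (mb r e (1/2) (1/10000) 3 4 Hr He).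
  pose proof (mb r e (1/2) (1/10000) 3 5 Hr He).
  pose proof (mb r e (1/2) (1/10000) 4 0 Hr He).
  pose proof (mb r e (1/2) (1/10000) 4 1 Hr He).
  pose proof (mb r e (1/2) (1/10000) 4 2 Hr He).
  pose proof (mb r e (1/2) (1/10000) 4 3 Hr He).
  pose proof (mb r e (1/2) (1/10000) 5 0 Hr He).
  pose proof (mb r e (1/2) (1/10000) 5 1 Hr He).
  unfold QA1_1; lra.
Qed.
Lemma QA1_1_eq u e : QA1E u e = QA1_1 (u - (1/2)) e.
Proof. unfold QA1E, QA1_1; lra. Qed.
Lemma QA1_sign u p : 0 <= u <= (1) -> (6283/2000) <= p <= (3927/1250) -> QA1 u p < 0.
Proof.
  intros Hu Hp.
  assert (He : 0 <= p - (6283/2000) <= (1/10000)) by lra.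
  rewrite QA1E_eq.
  destruct (Rle_lt_dec u (1/2)) as [Hk|Hk].
  {
    rewrite QA1_0_eq; apply QA1_0_sign; [lra|exact He].
  }
  assert (Hlo0 : (1/2) < u) by lra. clear Hk.
  {
    rewrite QA1_1_eq; apply QA1_1_sign; [lra|exact He].
  }
Qed.

Definition QA2 (u p : R) : R := (128) + (-5/12)*p^5 + (-64)*u^1 + (5/3)*u^1*p^3 + (7/180)*u^1*p^5 + (16/3)*u^2 + (-7/45)*u^2*p^3 + (-1/720)*u^2*p^5 + (-8/45)*u^3 + (1/180)*u^3*p^3.
Definition QA2E (u e : R) : R := (39214050010208357/76800000000000000) + (-1558361602735921/7680000000000)*e^1 + (-248028267187/1920000000)*e^2 + (-39476089/960000)*e^3 + (-6283/960)*e^4 + (-5/12)*e^5 + (-2467777725671458499/5760000000000000000)*u^1 + (39331315299151447/576000000000000)*u^1*e^1 + (3998077870309/144000000000)*u^1*e^2 + (396332623/72000000)*u^1*e^3 + (43981/72000)*u^1*e^4 + (7/180)*u^1*e^5 + (1972150350234208357/23040000000000000000)*u^2 + (-12169534325935921/2304000000000000)*u^2*e^1 + (-1092463467187/576000000000)*u^2*e^2 + (-84276089/288000000)*u^2*e^3 + (-6283/288000)*u^2*e^4 + (-1/720)*u^2*e^5 + (-2657244271/480000000000)*u^3 + (39476089/240000000)*u^3*e^1 + (6283/120000)*u^3*e^2 + (1/180)*u^3*e^3.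
Lemma QA2E_eq u p : QA2 u p = QA2E u (p - (6283/2000)).
Proof. unfold QA2, QA2E; lra. Qed.
Definition QA2_0 (r e : R) : R := (39214050010208357/76800000000000000) + (-1558361602735921/7680000000000)*e^1 + (-248028267187/1920000000)*e^2 + (-39476089/960000)*e^3 + (-6283/960)*e^4 + (-5/12)*e^5 + (-2467777725671458499/5760000000000000000)*r^1 + (39331315299151447/576000000000000)*r^1*e^1 + (3998077870309/144000000000)*r^1*e^2 + (396332623/72000000)*r^1*e^3 + (43981/72000)*r^1*e^4 + (7/180)*r^1*e^5 + (1972150350234208357/23040000000000000000)*r^2 + (-12169534325935921/2304000000000000)*r^2*e^1 + (-1092463467187/576000000000)*r^2*e^2 + (-84276089/288000000)*r^2*e^3 + (-6283/288000)*r^2*e^4 + (-1/720)*r^2*e^5 + (-2657244271/480000000000)*r^3 + (39476089/240000000)*r^3*e^1 + (6283/120000)*r^3*e^2 + (1/180)*r^3*e^3.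
Lemma QA2_0_sign r e : 0 <= r <= (1) -> 0 <= e <= (1/10000) -> QA2_0 r e > 0.
Proof.
  intros Hr He.
  pose proof (mb r e (1) (1/10000) 0 1 Hr He).
  pose proof (mb r e (1) (1/10000) 0 2 Hr He).
  pose proof (mb r e (1) (1/10000) 0 3 Hr He).
  pose proof (mb r e (1) (1/10000) 0 4 Hr He).
  pose proof (mb r e (1) (1/10000) 0 5 Hr He).
  pose proof (mb r e (1) (1/10000) 1 0 Hr He).
  pose proof (mb r e (1) (1/10000) 1 1 Hr He).
  pose proof (mb r e (1) (1/10000) 1 2 Hr He).
  pose proof (mb r e (1) (1/10000) 1 3 Hr He).
  pose proof (mb r e (1) (1/10000) 1 4 Hr He).
  pose proof (mb r e (1) (1/10000) 1 5 Hr He).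
  pose proof (mb r e (1) (1/10000) 2 0 Hr He).
  pose proof (mb r e (1) (1/10000) 2 1 Hr He).
  pose proof (mb r e (1) (1/10000) 2 2 Hr He).
  pose proof (mb r e (1) (1/10000) 2 3 Hr He).
  pose proof (mb r e (1) (1/10000) 2 4 Hr He).
  pose proof (mb r e (1) (1/10000) 2 5 Hr He).
  pose proof (mb r e (1) (1/10000) 3 0 Hr He).
  pose proof (mb r e (1) (1/10000) 3 1 Hr He).
  pose proof (mb r e (1) (1/10000) 3 2 Hr He).
  pose proof (mb r e (1) (1/10000) 3 3 Hr He).
  unfold QA2_0; lra.
Qed.
Lemma QA2_0_eq u e : QA2E u e = QA2_0 (u - (0)) e.
Proof. unfold QA2E, QA2_0; lra. Qed.
Lemma QA2_sign u p : 0 <= u <= (1) -> (6283/2000) <= p <= (3927/1250) -> QA2 u p > 0.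
Proof.
  intros Hu Hp.
  assert (He : 0 <= p - (6283/2000) <= (1/10000)) by lra.
  rewrite QA2E_eq.
  {
    rewrite QA2_0_eq; apply QA2_0_sign; [lra|exact He].
  }
Qed.

Definition QB1 (u p : R) : R := (-44)*p^2 + (16)*p^3 + (-2/3)*p^4 + (96)*u^1*p^1 + (-32)*u^1*p^2 + (2/3)*u^1*p^3 + (-48)*u^2 + (16)*u^2*p^1 + (22/3)*u^2*p^2 + (-8/3)*u^2*p^3 + (1/30)*u^2*p^4 + (-16)*u^3*p^1 + (16/3)*u^3*p^2 + (-1/30)*u^3*p^3 + (8)*u^4 + (-8/3)*u^4*p^1 + (-11/30)*u^4*p^2 + (2/15)*u^4*p^3 + (-1/1260)*u^4*p^4 + (4/5)*u^5*p^1 + (-4/15)*u^5*p^2 + (1/1260)*u^5*p^3 + (-2/5)*u^6 + (2/15)*u^6*p^1 + (11/1260)*u^6*p^2 + (-1/315)*u^6*p^3 + (1/90720)*u^6*p^4 + (-2/105)*u^7*p^1 + (2/315)*u^7*p^2 + (-1/90720)*u^7*p^3 + (1/105)*u^8 + (-1/315)*u^8*p^1 + (-11/90720)*u^8*p^2 + (1/22680)*u^8*p^3 + (1/3780)*u^9*p^1 + (-1/11340)*u^9*p^2 + (-1/7560)*u^10 + (1/22680)*u^10*p^1.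
Definition QB1E (u e : R) : R := (-74692273759921/24000000000000) + (343754936813/3000000000)*e^1 + (67315911/1000000)*e^2 + (5717/750)*e^3 + (-2/3)*e^4 + (77331723187/12000000000)*u^1 + (-170635911/2000000)*u^1*e^1 + (-25717/1000)*u^1*e^2 + (2/3)*u^1*e^3 + (-2300482827184079/480000000000000)*u^2 + (-254860804271/20000000000)*u^2*e^1 + (-949491733/60000000)*u^2*e^2 + (-11239/5000)*u^2*e^3 + (1/30)*u^2*e^4 + (320960212813/240000000000)*u^3 + (1982691733/120000000)*u^3*e^1 + (301151/60000)*u^3*e^2 + (-1/30)*u^3*e^3 + (1220283700096079/20160000000000000)*u^4 + (-2825545839187/2520000000000)*u^4*e^1 + (236022637/280000000)*u^4*e^2 + (77717/630000)*u^4*e^3 + (-1/1260)*u^4*e^4 + (-946847540813/10080000000000)*u^5 + (-477102637/560000000)*u^5*e^1 + (-217717/840000)*u^5*e^2 + (1/1260)*u^5*e^3 + (1591381950717703/207360000000000000)*u^6 + (17338629819187/181440000000000)*u^6*e^1 + (-1242027911/60480000000)*u^6*e^2 + (-137717/45360000)*u^6*e^3 + (1/90720)*u^6*e^4 + (257190037259/103680000000000)*u^7 + (2481867911/120960000000)*u^7*e^1 + (377717/60480000)*u^7*e^2 + (-1/90720)*u^7*e^3 + (-5621580257/20160000000000)*u^8 + (-34097819/12960000000)*u^8*e^1 + (1907/6480000)*u^8*e^2 + (1/22680)*u^8*e^3 + (-1778089/45360000000)*u^9 + (-469/1620000)*u^9*e^1 + (-1/11340)*u^9*e^2 + (283/45360000)*u^10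 + (1/22680)*u^10*e^1.
Lemma QB1E_eq u p : QB1 u p = QB1E u (p - (6283/2000)).
Proof. unfold QB1, QB1E; lra. Qed.
Definition QB1_0 (r e : R) : R := (-74692273759921/24000000000000) + (343754936813/3000000000)*e^1 + (67315911/1000000)*e^2 + (5717/750)*e^3 + (-2/3)*e^4 + (77331723187/12000000000)*r^1 + (-170635911/2000000)*r^1*e^1 + (-25717/1000)*r^1*e^2 + (2/3)*r^1*e^3 + (-2300482827184079/480000000000000)*r^2 + (-254860804271/20000000000)*r^2*e^1 + (-949491733/60000000)*r^2*e^2 + (-11239/5000)*r^2*e^3 + (1/30)*r^2*e^4 + (320960212813/240000000000)*r^3 + (1982691733/120000000)*r^3*e^1 + (301151/60000)*r^3*e^2 + (-1/30)*r^3*e^3 + (1220283700096079/20160000000000000)*r^4 + (-2825545839187/2520000000000)*r^4*e^1 + (236022637/280000000)*r^4*e^2 + (77717/630000)*r^4*e^3 + (-1/1260)*r^4*e^4 + (-946847540813/10080000000000)*r^5 + (-477102637/560000000)*r^5*e^1 + (-217717/840000)*r^5*e^2 + (1/1260)*r^5*e^3 + (1591381950717703/207360000000000000)*r^6 + (17338629819187/181440000000000)*r^6*e^1 + (-1242027911/60480000000)*r^6*e^2 + (-137717/45360000)*r^6*e^3 + (1/90720)*r^6*e^4 + (257190037259/103680000000000)*r^7 + (2481867911/120960000000)*r^7*e^1 + (377717/60480000)*r^7*e^2 + (-1/90720)*r^7*e^3 + (-5621580257/20160000000000)*r^8 + (-34097819/12960000000)*r^8*e^1 + (1907/6480000)*r^8*e^2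 + (1/22680)*r^8*e^3 + (-1778089/45360000000)*r^9 + (-469/1620000)*r^9*e^1 + (-1/11340)*r^9*e^2 + (283/45360000)*r^10 + (1/22680)*r^10*e^1.
Lemma QB1_0_sign r e : 0 <= r <= (5/16) -> 0 <= e <= (1/10000) -> QB1_0 r e < 0.
Proof.
  intros Hr He.
  pose proof (mb r e (5/16) (1/10000) 0 1 Hr He).
  pose proof (mb r e (5/16) (1/10000) 0 2 Hr He).
  pose proof (mb r e (5/16) (1/10000) 0 3 Hr He).
  pose proof (mb r e (5/16) (1/10000) 0 4 Hr He).
  pose proof (mb r e (5/16) (1/10000) 1 0 Hr He).
  pose proof (mb r e (5/16) (1/10000) 1 1 Hr He).
  pose proof (mb r e (5/16) (1/10000) 1 2 Hr He).
  pose proof (mb r e (5/16) (1/10000) 1 3 Hr He).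
  pose proof (mb r e (5/16) (1/10000) 2 0 Hr He).
  pose proof (mb r e (5/16) (1/10000) 2 1 Hr He).
  pose proof (mb r e (5/16) (1/10000) 2 2 Hr He).
  pose proof (mb r e (5/16) (1/10000) 2 3 Hr He).
  pose proof (mb r e (5/16) (1/10000) 2 4 Hr He).
  pose proof (mb r e (5/16) (1/10000) 3 0 Hr He).
  pose proof (mb r e (5/16) (1/10000) 3 1 Hr He).
  pose proof (mb r e (5/16) (1/10000) 3 2 Hr He).
  pose proof (mb r e (5/16) (1/10000) 3 3 Hr He).
  pose proof (mb r e (5/16) (1/10000) 4 0 Hr He).
  pose proof (mb r e (5/16) (1/10000) 4 1 Hr He).
  pose proof (mb r e (5/16) (1/10000) 4 2 Hr He).
  pose proof (mb r e (5/16) (1/10000) 4 3 Hr He).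
  pose proof (mb r e (5/16) (1/10000) 4 4 Hr He).
  pose proof (mb r e (5/16) (1/10000) 5 0 Hr He).
  pose proof (mb r e (5/16) (1/10000) 5 1 Hr He).
  pose proof (mb r e (5/16) (1/10000) 5 2 Hr He).
  pose proof (mb r e (5/16) (1/10000) 5 3 Hr He).
  pose proof (mb r e (5/16) (1/10000) 6 0 Hr He).
  pose proof (mb r e (5/16) (1/10000) 6 1 Hr He).
  pose proof (mb r e (5/16) (1/10000) 6 2 Hr He).
  pose proof (mb r e (5/16) (1/10000) 6 3 Hr He).
  pose proof (mb r e (5/16) (1/10000) 6 4 Hr He).
  pose proof (mb r e (5/16) (1/10000) 7 0 Hr He).
  pose proof (mb r e (5/16) (1/10000) 7 1 Hr He).
  pose proof (mb r e (5/16) (1/10000) 7 2 Hr He).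
  pose proof (mb r e (5/16) (1/10000) 7 3 Hr He).
  pose proof (mb r e (5/16) (1/10000) 8 0 Hr He).
  pose proof (mb r e (5/16) (1/10000) 8 1 Hr He).
  pose proof (mb r e (5/16) (1/10000) 8 2 Hr He).
  pose proof (mb r e (5/16) (1/10000) 8 3 Hr He).
  pose proof (mb r e (5/16) (1/10000) 9 0 Hr He).
  pose proof (mb r e (5/16) (1/10000) 9 1 Hr He).
  pose proof (mb r e (5/16) (1/10000) 9 2 Hr He).
  pose proof (mb r e (5/16) (1/10000) 10 0 Hr He).
  pose proof (mb r e (5/16) (1/10000) 10 1 Hr He).
  unfold QB1_0; lra.
Qed.
Lemma QB1_0_eq u e : QB1E u e = QB1_0 (u - (0)) e.
Proof. unfold QB1E, QB1_0; lra. Qed.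
Definition QB1_1 (r e : R) : R := (-3714355237495099375801193/2435246456832000000000000) + (70759955819799832050569/811748818944000000000)*e^1 + (31330459963891932311/541165879296000000)*e^2 + (18536236442923477/2435246456832000)*e^3 + (-201948601291/304405807104)*e^4 + (585029849095474713001019/152202903552000000000000)*r^1 + (-1284555682269442917047/14495514624000000000)*r^1*e^1 + (-740290183311141353/21743271936000000)*r^1*e^2 + (-1032910546127/1409286144000)*r^1*e^3 + (65753713/3170893824)*r^1*e^4 + (-447841276535133825535283/126835752960000000000000)*r^2 + (350949454392575007113/190253629440000000000)*r^2*e^1 + (-127316617505985787/11890851840000000)*r^2*e^2 + (-13121318479151/5945425920000)*r^2*e^3 + (65141813/1981808640)*r^2*e^4 + (19476447094969467277/14680064000000000000)*r^3 + (2844605697190937377/198180864000000000)*r^3*e^1 + (1726948882722473/297271296000000)*r^3*e^2 + (17805467179/148635648000)*r^3*e^3 + (-18307/18579456)*r^3*e^4 + (-26958404039416401497/371589120000000000000)*r^4 + (-212958507068596193/92897280000000000)*r^4*e^1 + (77050904761499/185794560000000)*r^4*e^2 + (1240391953/10321920000)*r^4*e^3 + (-6019/7741440)*r^4*e^4 + (-116083497269472083/1548288000000000000)*r^5 + (-368990717515853/580608000000000)*r^5*e^1 + (-165175703423/580608000000)*r^5*e^2 + (-401969/82944000)*r^5*e^3 + (1/48384)*r^5*e^4 + (1693490253941177/138240000000000000)*r^6 + (64155517867207/483840000000000)*r^6*e^1 + (-571163429/90720000000)*r^6*e^2 + (-66671/22680000)*r^6*e^3 + (1/90720)*r^6*e^4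 + (1210952562683/725760000000000)*r^7 + (4748012653/362880000000)*r^7*e^1 + (172913/25920000)*r^7*e^2 + (1/10080)*r^7*e^3 + (-1822864283/5040000000000)*r^8 + (-73743527/22680000000)*r^8*e^1 + (2099/45360000)*r^8*e^2 + (1/22680)*r^8*e^3 + (-446857/22680000000)*r^9 + (-1147/7560000)*r^9*e^1 + (-1/11340)*r^9*e^2 + (283/45360000)*r^10 + (1/22680)*r^10*e^1.
Lemma QB1_1_sign r e : 0 <= r <= (5/16) -> 0 <= e <= (1/10000) -> QB1_1 r e < 0.
Proof.
  intros Hr He.
  pose proof (mb r e (5/16) (1/10000) 0 1 Hr He).
  pose proof (mb r e (5/16) (1/10000) 0 2 Hr He).
  pose proof (mb r e (5/16) (1/10000) 0 3 Hr He).
  pose proof (mb r e (5/16) (1/10000) 0 4 Hr He).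
  pose proof (mb r e (5/16) (1/10000) 1 0 Hr He).
  pose proof (mb r e (5/16) (1/10000) 1 1 Hr He).
  pose proof (mb r e (5/16) (1/10000) 1 2 Hr He).
  pose proof (mb r e (5/16) (1/10000) 1 3 Hr He).
  pose proof (mb r e (5/16) (1/10000) 1 4 Hr He).
  pose proof (mb r e (5/16) (1/10000) 2 0 Hr He).
  pose proof (mb r e (5/16) (1/10000) 2 1 Hr He).
  pose proof (mb r e (5/16) (1/10000) 2 2 Hr He).
  pose proof (mb r e (5/16) (1/10000) 2 3 Hr He).
  pose proof (mb r e (5/16) (1/10000) 2 4 Hr He).
  pose proof (mb r e (5/16) (1/10000) 3 0 Hr He).
  pose proof (mb r e (5/16) (1/10000) 3 1 Hr He).
  pose proof (mb r e (5/16) (1/10000) 3 2 Hr He).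
  pose proof (mb r e (5/16) (1/10000) 3 3 Hr He).
  pose proof (mb r e (5/16) (1/10000) 3 4 Hr He).
  pose proof (mb r e (5/16) (1/10000) 4 0 Hr He).
  pose proof (mb r e (5/16) (1/10000) 4 1 Hr He).
  pose proof (mb r e (5/16) (1/10000) 4 2 Hr He).
  pose proof (mb r e (5/16) (1/10000) 4 3 Hr He).
  pose proof (mb r e (5/16) (1/10000) 4 4 Hr He).
  pose proof (mb r e (5/16) (1/10000) 5 0 Hr He).
  pose proof (mb r e (5/16) (1/10000) 5 1 Hr He).
  pose proof (mb r e (5/16) (1/10000) 5 2 Hr He).
  pose proof (mb r e (5/16) (1/10000) 5 3 Hr He).
  pose proof (mb r e (5/16) (1/10000) 5 4 Hr He).
  pose proof (mb r e (5/16) (1/10000) 6 0 Hr He).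
  pose proof (mb r e (5/16) (1/10000) 6 1 Hr He).
  pose proof (mb r e (5/16) (1/10000) 6 2 Hr He).
  pose proof (mb r e (5/16) (1/10000) 6 3 Hr He).
  pose proof (mb r e (5/16) (1/10000) 6 4 Hr He).
  pose proof (mb r e (5/16) (1/10000) 7 0 Hr He).
  pose proof (mb r e (5/16) (1/10000) 7 1 Hr He).
  pose proof (mb r e (5/16) (1/10000) 7 2 Hr He).
  pose proof (mb r e (5/16) (1/10000) 7 3 Hr He).
  pose proof (mb r e (5/16) (1/10000) 8 0 Hr He).
  pose proof (mb r e (5/16) (1/10000) 8 1 Hr He).
  pose proof (mb r e (5/16) (1/10000) 8 2 Hr He).
  pose proof (mb r e (5/16) (1/10000) 8 3 Hr He).
  pose proof (mb r e (5/16) (1/10000) 9 0 Hr He).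
  pose proof (mb r e (5/16) (1/10000) 9 1 Hr He).
  pose proof (mb r e (5/16) (1/10000) 9 2 Hr He).
  pose proof (mb r e (5/16) (1/10000) 10 0 Hr He).
  pose proof (mb r e (5/16) (1/10000) 10 1 Hr He).
  unfold QB1_1; lra.
Qed.
Lemma QB1_1_eq u e : QB1E u e = QB1_1 (u - (5/16)) e.
Proof. unfold QB1E, QB1_1; lra. Qed.
Lemma QB1_sign u p : 0 <= u <= (5/8) -> (6283/2000) <= p <= (3927/1250) -> QB1 u p < 0.
Proof.
  intros Hu Hp.
  assert (He : 0 <= p - (6283/2000) <= (1/10000)) by lra.
  rewrite QB1E_eq.
  destruct (Rle_lt_dec u (5/16)) as [Hk|Hk].
  {
    rewrite QB1_0_eq; apply QB1_0_sign; [lra|exact He].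
  }
  assert (Hlo0 : (5/16) < u) by lra. clear Hk.
  {
    rewrite QB1_1_eq; apply QB1_1_sign; [lra|exact He].
  }
Qed.

Definition QB2 (u p : R) : R := (-56)*p^3 + (8)*p^4 + (1)*p^6 + (192)*u^1*p^2 + (-8)*u^1*p^3 + (-4/3)*u^1*p^4 + (-5)*u^1*p^5 + (-256)*u^2*p^1 + (32/3)*u^2*p^3 + (20/3)*u^2*p^4 + (-1/6)*u^2*p^6 + (128)*u^3 + (-32)*u^3*p^2 + (-8/3)*u^3*p^3 + (1/15)*u^3*p^4 + (5/6)*u^3*p^5 + (128/3)*u^4*p^1 + (-8/15)*u^4*p^3 + (-19/15)*u^4*p^4 + (1/120)*u^4*p^6 + (-64/3)*u^5 + (8/5)*u^5*p^2 + (3/5)*u^5*p^3 + (-1/630)*u^5*p^4 + (-1/24)*u^5*p^5 + (-32/15)*u^6*p^1 + (4/315)*u^6*p^3 + (41/630)*u^6*p^4 + (-1/5040)*u^6*p^6 + (16/15)*u^7 + (-4/105)*u^7*p^2 + (-2/63)*u^7*p^3 + (1/1008)*u^7*p^5 + (16/315)*u^8*p^1 + (-1/630)*u^8*p^4 + (-8/315)*u^9 + (1/1260)*u^9*p^3.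
Definition QB2E (u e : R) : R := (268928911559332892969/64000000000000000000) + (18719435141937374929/16000000000000000)*e^1 + (4502096225807763/3200000000000)*e^2 + (265839467187/400000000)*e^3 + (124828267/800000)*e^4 + (18849/1000)*e^5 + (1)*e^6 + (-247915521937248529/19200000000000000)*u^1 + (-3131160415487123/1920000000000)*u^1*e^1 + (-242003975667/160000000)*u^1*e^2 + (-124369387/240000)*u^1*e^3 + (-19169/240)*u^1*e^4 + (-5)*u^1*e^5 + (5988291913705499107031/384000000000000000000)*u^2 + (55737124001870625071/96000000000000000)*u^2*e^1 + (1611487293264079/6400000000000)*u^2*e^2 + (-21372267187/2400000000)*u^2*e^3 + (-86428267/4800000)*u^2*e^4 + (-6283/2000)*u^2*e^5 + (-1/6)*u^2*e^6 + (-115364184788686999/12800000000000000)*u^3 + (171625939138619/1280000000000)*u^3*e^1 + (196971251731/960000000)*u^3*e^2 + (12866067/160000)*u^3*e^3 + (421/32)*u^3*e^4 + (5/6)*u^3*e^5 + (16450414060601892892969/7680000000000000000000)*u^4 + (-220626451401422625071/1920000000000000000)*u^4*e^1 + (-8685602442064079/128000000000000)*u^4*e^2 + (-541584532813/48000000000)*u^4*e^3 + (-3171733/96000000)*u^4*e^4 + (6283/40000)*u^4*e^5 + (1/120)*u^4*e^6 + (2510853832032101897/16128000000000000000)*u^5 + (11820252353186299/1612800000000000)*u^5*e^1 + (-257932846263/44800000000)*u^5*e^2 + (-712058989/201600000)*u^5*e^3 + (-132263/201600)*u^5*e^4 + (-1/24)*u^5*e^5 + (-51711237734513508892969/322560000000000000000000)*u^6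 + (479738251600718625071/80640000000000000000)*u^6*e^1 + (19802069104464079/5376000000000000)*u^6*e^2 + (1426230932813/2016000000000)*u^6*e^3 + (143971733/4032000000)*u^6*e^4 + (-6283/1680000)*u^6*e^5 + (-1/5040)*u^6*e^6 + (322913209253791643/32256000000000000000)*u^7 + (-2245457072464079/3225600000000000)*u^7*e^1 + (-23958932813/806400000000)*u^7*e^2 + (26676089/403200000)*u^7*e^3 + (6283/403200)*u^7*e^4 + (1/1008)*u^7*e^5 + (16695465754693/3360000000000000)*u^8 + (-20447585243/140000000000)*u^8*e^1 + (-39476089/420000000)*u^8*e^2 + (-6283/315000)*u^8*e^3 + (-1/630)*u^8*e^4 + (-2657244271/3360000000000)*u^9 + (39476089/1680000000)*u^9*e^1 + (6283/840000)*u^9*e^2 + (1/1260)*u^9*e^3.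
Lemma QB2E_eq u p : QB2 u p = QB2E u (p - (6283/2000)).
Proof. unfold QB2, QB2E; lra. Qed.
Definition QB2_0 (r e : R) : R := (268928911559332892969/64000000000000000000) + (18719435141937374929/16000000000000000)*e^1 + (4502096225807763/3200000000000)*e^2 + (265839467187/400000000)*e^3 + (124828267/800000)*e^4 + (18849/1000)*e^5 + (1)*e^6 + (-247915521937248529/19200000000000000)*r^1 + (-3131160415487123/1920000000000)*r^1*e^1 + (-242003975667/160000000)*r^1*e^2 + (-124369387/240000)*r^1*e^3 + (-19169/240)*r^1*e^4 + (-5)*r^1*e^5 + (5988291913705499107031/384000000000000000000)*r^2 + (55737124001870625071/96000000000000000)*r^2*e^1 + (1611487293264079/6400000000000)*r^2*e^2 + (-21372267187/2400000000)*r^2*e^3 + (-86428267/4800000)*r^2*e^4 + (-6283/2000)*r^2*e^5 + (-1/6)*r^2*e^6 + (-115364184788686999/12800000000000000)*r^3 + (171625939138619/1280000000000)*r^3*e^1 + (196971251731/960000000)*r^3*e^2 + (12866067/160000)*r^3*e^3 + (421/32)*r^3*e^4 + (5/6)*r^3*e^5 + (16450414060601892892969/7680000000000000000000)*r^4 + (-220626451401422625071/1920000000000000000)*r^4*e^1 + (-8685602442064079/128000000000000)*r^4*e^2 + (-541584532813/48000000000)*r^4*e^3 + (-3171733/96000000)*r^4*e^4 + (6283/40000)*r^4*e^5 + (1/120)*r^4*e^6 + (2510853832032101897/16128000000000000000)*r^5 + (11820252353186299/1612800000000000)*r^5*e^1 + (-257932846263/44800000000)*r^5*e^2 + (-712058989/201600000)*r^5*e^3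 + (-132263/201600)*r^5*e^4 + (-1/24)*r^5*e^5 + (-51711237734513508892969/322560000000000000000000)*r^6 + (479738251600718625071/80640000000000000000)*r^6*e^1 + (19802069104464079/5376000000000000)*r^6*e^2 + (1426230932813/2016000000000)*r^6*e^3 + (143971733/4032000000)*r^6*e^4 + (-6283/1680000)*r^6*e^5 + (-1/5040)*r^6*e^6 + (322913209253791643/32256000000000000000)*r^7 + (-2245457072464079/3225600000000000)*r^7*e^1 + (-23958932813/806400000000)*r^7*e^2 + (26676089/403200000)*r^7*e^3 + (6283/403200)*r^7*e^4 + (1/1008)*r^7*e^5 + (16695465754693/3360000000000000)*r^8 + (-20447585243/140000000000)*r^8*e^1 + (-39476089/420000000)*r^8*e^2 + (-6283/315000)*r^8*e^3 + (-1/630)*r^8*e^4 + (-2657244271/3360000000000)*r^9 + (39476089/1680000000)*r^9*e^1 + (6283/840000)*r^9*e^2 + (1/1260)*r^9*e^3.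
Lemma QB2_0_sign r e : 0 <= r <= (5/32) -> 0 <= e <= (1/10000) -> QB2_0 r e > 0.
Proof.
  intros Hr He.
  pose proof (mb r e (5/32) (1/10000) 0 1 Hr He).
  pose proof (mb r e (5/32) (1/10000) 0 2 Hr He).
  pose proof (mb r e (5/32) (1/10000) 0 3 Hr He).
  pose proof (mb r e (5/32) (1/10000) 0 4 Hr He).
  pose proof (mb r e (5/32) (1/10000) 0 5 Hr He).
  pose proof (mb r e (5/32) (1/10000) 0 6 Hr He).
  pose proof (mb r e (5/32) (1/10000) 1 0 Hr He).
  pose proof (mb r e (5/32) (1/10000) 1 1 Hr He).
  pose proof (mb r e (5/32) (1/10000) 1 2 Hr He).
  pose proof (mb r e (5/32) (1/10000) 1 3 Hr He).
  pose proof (mb r e (5/32) (1/10000) 1 4 Hr He).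
  pose proof (mb r e (5/32) (1/10000) 1 5 Hr He).
  pose proof (mb r e (5/32) (1/10000) 2 0 Hr He).
  pose proof (mb r e (5/32) (1/10000) 2 1 Hr He).
  pose proof (mb r e (5/32) (1/10000) 2 2 Hr He).
  pose proof (mb r e (5/32) (1/10000) 2 3 Hr He).
  pose proof (mb r e (5/32) (1/10000) 2 4 Hr He).
  pose proof (mb r e (5/32) (1/10000) 2 5 Hr He).
  pose proof (mb r e (5/32) (1/10000) 2 6 Hr He).
  pose proof (mb r e (5/32) (1/10000) 3 0 Hr He).
  pose proof (mb r e (5/32) (1/10000) 3 1 Hr He).
  pose proof (mb r e (5/32) (1/10000) 3 2 Hr He).
  pose proof (mb r e (5/32) (1/10000) 3 3 Hr He).
  pose proof (mb r e (5/32) (1/10000) 3 4 Hr He).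
  pose proof (mb r e (5/32) (1/10000) 3 5 Hr He).
  pose proof (mb r e (5/32) (1/10000) 4 0 Hr He).
  pose proof (mb r e (5/32) (1/10000) 4 1 Hr He).
  pose proof (mb r e (5/32) (1/10000) 4 2 Hr He).
  pose proof (mb r e (5/32) (1/10000) 4 3 Hr He).
  pose proof (mb r e (5/32) (1/10000) 4 4 Hr He).
  pose proof (mb r e (5/32) (1/10000) 4 5 Hr He).
  pose proof (mb r e (5/32) (1/10000) 4 6 Hr He).
  pose proof (mb r e (5/32) (1/10000) 5 0 Hr He).
  pose proof (mb r e (5/32) (1/10000) 5 1 Hr He).
  pose proof (mb r e (5/32) (1/10000) 5 2 Hr He).
  pose proof (mb r e (5/32) (1/10000) 5 3 Hr He).
  pose proof (mb r e (5/32) (1/10000) 5 4 Hr He).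
  pose proof (mb r e (5/32) (1/10000) 5 5 Hr He).
  pose proof (mb r e (5/32) (1/10000) 6 0 Hr He).
  pose proof (mb r e (5/32) (1/10000) 6 1 Hr He).
  pose proof (mb r e (5/32) (1/10000) 6 2 Hr He).
  pose proof (mb r e (5/32) (1/10000) 6 3 Hr He).
  pose proof (mb r e (5/32) (1/10000) 6 4 Hr He).
  pose proof (mb r e (5/32) (1/10000) 6 5 Hr He).
  pose proof (mb r e (5/32) (1/10000) 6 6 Hr He).
  pose proof (mb r e (5/32) (1/10000) 7 0 Hr He).
  pose proof (mb r e (5/32) (1/10000) 7 1 Hr He).
  pose proof (mb r e (5/32) (1/10000) 7 2 Hr He).
  pose proof (mb r e (5/32) (1/10000) 7 3 Hr He).
  pose proof (mb r e (5/32) (1/10000) 7 4 Hr He).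
  pose proof (mb r e (5/32) (1/10000) 7 5 Hr He).
  pose proof (mb r e (5/32) (1/10000) 8 0 Hr He).
  pose proof (mb r e (5/32) (1/10000) 8 1 Hr He).
  pose proof (mb r e (5/32) (1/10000) 8 2 Hr He).
  pose proof (mb r e (5/32) (1/10000) 8 3 Hr He).
  pose proof (mb r e (5/32) (1/10000) 8 4 Hr He).
  pose proof (mb r e (5/32) (1/10000) 9 0 Hr He).
  pose proof (mb r e (5/32) (1/10000) 9 1 Hr He).
  pose proof (mb r e (5/32) (1/10000) 9 2 Hr He).
  pose proof (mb r e (5/32) (1/10000) 9 3 Hr He).
  unfold QB2_0; lra.
Qed.
Lemma QB2_0_eq u e : QB2E u e = QB2_0 (u - (0)) e.
Proof. unfold QB2E, QB2_0; lra. Qed.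
Definition QB2_1 (r e : R) : R := (87698506230646767818616800267549/34634616274944000000000000000000) + (2012636285313196229341830779021/2164663517184000000000000000)*e^1 + (8156190049083899594869966817/6926923254988800000000000)*e^2 + (2021661731554757127085307/3463461627494400000000)*e^3 + (247925018731884161953/1731730813747200000)*e^4 + (77903303956648357/4329327034368000)*e^5 + (1077933112267/1082331758592)*e^6 + (-468976621784021084773320920543/54116587929600000000000000000)*r^1 + (-311989606014588465798032009983/216466351718400000000000000)*r^1*e^1 + (-61470458179256043600137401/43293270343680000000000)*r^1*e^2 + (-3718035423362209769707/7215545057280000000)*r^1*e^3 + (-304988530755935053/3607772528640000)*r^1*e^4 + (-160142158341521/27058293964800)*r^1*e^5 + (-292885105/5637144576)*r^1*e^6 + (225898899180057857352732586123/19327352832000000000000000000)*r^2 + (42410170549728932055538965577/67645734912000000000000000)*r^2*e^1 + (15870703319394267187863/46976204800000000000)*r^2*e^2 + (45673333790437597931/1691143372800000000)*r^2*e^3 + (-20071190228346827/1691143372800000)*r^2*e^4 + (-3846628097821/1409286144000)*r^2*e^5 + (-19430267/117440512)*r^2*e^6 + (-10778329748845472669446592453/1409286144000000000000000000)*r^3 + (136331943562320858660444287/2113929216000000000000000)*r^3*e^1 + (17085042109359307567291/105696460800000000000)*r^3*e^2 + (182588055165997741/2516582400000000)*r^3*e^3 + (228629711456071/17616076800000)*r^3*e^4 + (121692041047/132120576000)*r^3*e^5 + (42883/8257536)*r^3*e^6 + (485858833451626086448918043/220200960000000000000000000)*r^4 + (-561533067852977242913169/5242880000000000000000)*r^4*e^1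 + (-1172787330062432015021/16515072000000000000)*r^4*e^2 + (-56875132146880133/4128768000000000)*r^4*e^3 + (-4380623782853/8257536000000)*r^4*e^4 + (2545092043/20643840000)*r^4*e^5 + (4737/573440)*r^4*e^6 + (47572243101199315644497/4128768000000000000000000)*r^5 + (25846083612119487706079/2064384000000000000000)*r^5*e^1 + (-20118904232023319/8601600000000000)*r^5*e^2 + (-4070104702333/1433600000000)*r^5*e^3 + (-1511278349/2457600000)*r^5*e^4 + (-1920917/43008000)*r^5*e^5 + (-1/5376)*r^5*e^6 + (-94330951938125970907813/645120000000000000000000)*r^6 + (547859965679575599053/107520000000000000000)*r^6*e^1 + (7235564187204889/2016000000000000)*r^6*e^2 + (6180561459377/8064000000000)*r^6*e^3 + (416634091/8064000000)*r^6*e^4 + (-53521/20160000)*r^6*e^5 + (-1/5040)*r^6*e^6 + (500838299773545143/32256000000000000000)*r^7 + (-2767731627274979/3225600000000000)*r^7*e^1 + (-113400265163/806400000000)*r^7*e^2 + (16904539/403200000)*r^7*e^3 + (5483/403200)*r^7*e^4 + (1/1008)*r^7*e^5 + (51834863994397/13440000000000000)*r^8 + (-253143697013/2240000000000)*r^8*e^1 + (-40066691/480000000)*r^8*e^2 + (-94903/5040000)*r^8*e^3 + (-1/630)*r^8*e^4 + (-2657244271/3360000000000)*r^9 + (39476089/1680000000)*r^9*e^1 + (6283/840000)*r^9*e^2 + (1/1260)*r^9*e^3.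
Lemma QB2_1_sign r e : 0 <= r <= (15/64) -> 0 <= e <= (1/10000) -> QB2_1 r e > 0.
Proof.
  intros Hr He.
  pose proof (mb r e (15/64) (1/10000) 0 1 Hr He).
  pose proof (mb r e (15/64) (1/10000) 0 2 Hr He).
  pose proof (mb r e (15/64) (1/10000) 0 3 Hr He).
  pose proof (mb r e (15/64) (1/10000) 0 4 Hr He).
  pose proof (mb r e (15/64) (1/10000) 0 5 Hr He).
  pose proof (mb r e (15/64) (1/10000) 0 6 Hr He).
  pose proof (mb r e (15/64) (1/10000) 1 0 Hr He).
  pose proof (mb r e (15/64) (1/10000) 1 1 Hr He).
  pose proof (mb r e (15/64) (1/10000) 1 2 Hr He).
  pose proof (mb r e (15/64) (1/10000) 1 3 Hr He).
  pose proof (mb r e (15/64) (1/10000) 1 4 Hr He).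
  pose proof (mb r e (15/64) (1/10000) 1 5 Hr He).
  pose proof (mb r e (15/64) (1/10000) 1 6 Hr He).
  pose proof (mb r e (15/64) (1/10000) 2 0 Hr He).
  pose proof (mb r e (15/64) (1/10000) 2 1 Hr He).
  pose proof (mb r e (15/64) (1/10000) 2 2 Hr He).
  pose proof (mb r e (15/64) (1/10000) 2 3 Hr He).
  pose proof (mb r e (15/64) (1/10000) 2 4 Hr He).
  pose proof (mb r e (15/64) (1/10000) 2 5 Hr He).
  pose proof (mb r e (15/64) (1/10000) 2 6 Hr He).
  pose proof (mb r e (15/64) (1/10000) 3 0 Hr He).
  pose proof (mb r e (15/64) (1/10000) 3 1 Hr He).
  pose proof (mb r e (15/64) (1/10000) 3 2 Hr He).
  pose proof (mb r e (15/64) (1/10000) 3 3 Hr He).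
  pose proof (mb r e (15/64) (1/10000) 3 4 Hr He).
  pose proof (mb r e (15/64) (1/10000) 3 5 Hr He).
  pose proof (mb r e (15/64) (1/10000) 3 6 Hr He).
  pose proof (mb r e (15/64) (1/10000) 4 0 Hr He).
  pose proof (mb r e (15/64) (1/10000) 4 1 Hr He).
  pose proof (mb r e (15/64) (1/10000) 4 2 Hr He).
  pose proof (mb r e (15/64) (1/10000) 4 3 Hr He).
  pose proof (mb r e (15/64) (1/10000) 4 4 Hr He).
  pose proof (mb r e (15/64) (1/10000) 4 5 Hr He).
  pose proof (mb r e (15/64) (1/10000) 4 6 Hr He).
  pose proof (mb r e (15/64) (1/10000) 5 0 Hr He).
  pose proof (mb r e (15/64) (1/10000) 5 1 Hr He).
  pose proof (mb r e (15/64) (1/10000) 5 2 Hr He).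
  pose proof (mb r e (15/64) (1/10000) 5 3 Hr He).
  pose proof (mb r e (15/64) (1/10000) 5 4 Hr He).
  pose proof (mb r e (15/64) (1/10000) 5 5 Hr He).
  pose proof (mb r e (15/64) (1/10000) 5 6 Hr He).
  pose proof (mb r e (15/64) (1/10000) 6 0 Hr He).
  pose proof (mb r e (15/64) (1/10000) 6 1 Hr He).
  pose proof (mb r e (15/64) (1/10000) 6 2 Hr He).
  pose proof (mb r e (15/64) (1/10000) 6 3 Hr He).
  pose proof (mb r e (15/64) (1/10000) 6 4 Hr He).
  pose proof (mb r e (15/64) (1/10000) 6 5 Hr He).
  pose proof (mb r e (15/64) (1/10000) 6 6 Hr He).
  pose proof (mb r e (15/64) (1/10000) 7 0 Hr He).
  pose proof (mb r e (15/64) (1/10000) 7 1 Hr He).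
  pose proof (mb r e (15/64) (1/10000) 7 2 Hr He).
  pose proof (mb r e (15/64) (1/10000) 7 3 Hr He).
  pose proof (mb r e (15/64) (1/10000) 7 4 Hr He).
  pose proof (mb r e (15/64) (1/10000) 7 5 Hr He).
  pose proof (mb r e (15/64) (1/10000) 8 0 Hr He).
  pose proof (mb r e (15/64) (1/10000) 8 1 Hr He).
  pose proof (mb r e (15/64) (1/10000) 8 2 Hr He).
  pose proof (mb r e (15/64) (1/10000) 8 3 Hr He).
  pose proof (mb r e (15/64) (1/10000) 8 4 Hr He).
  pose proof (mb r e (15/64) (1/10000) 9 0 Hr He).
  pose proof (mb r e (15/64) (1/10000) 9 1 Hr He).
  pose proof (mb r e (15/64) (1/10000) 9 2 Hr He).
  pose proof (mb r e (15/64) (1/10000) 9 3 Hr He).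
  unfold QB2_1; lra.
Qed.
Lemma QB2_1_eq u e : QB2E u e = QB2_1 (u - (5/32)) e.
Proof. unfold QB2E, QB2_1; lra. Qed.
Definition QB2_2 (r e : R) : R := (74564941710661995860116950903388927/70931694131085312000000000000000000) + (22234373393483697197970192707598839/35465847065542656000000000000000)*e^1 + (3068172482100428723793987276829/3546584706554265600000000000)*e^2 + (825142146203046584634441709/1773292353277132800000000)*e^3 + (27234643779401604362009/221661544159641600000)*e^4 + (9126613175316979421/554153860399104000)*e^5 + (67521016041763/69269232549888)*e^6 + (-192155580455716412196530274038329/44332308831928320000000000000000)*r^1 + (-3616509971931788203756478299279/3166593487994880000000000000)*r^1*e^1 + (-2745358176846823795916473883/2216615441596416000000000)*r^1*e^2 + (-60515327302213383021427/123145302310912000000)*r^1*e^3 + (-193508363344987161/2199023255552000)*r^1*e^4 + (-2438418156807517/346346162749440)*r^1*e^5 + (-23131655525/180388626432)*r^1*e^6 + (15223683341087278650392155266481/2164663517184000000000000000000)*r^2 + (12346703983197073522689617657/19327352832000000000000000)*r^2*e^1 + (10293074018711702866696711/24051816857600000000000)*r^2*e^2 + (7917406337427479545679/108233175859200000000)*r^2*e^3 + (-162047448529643209/54116587929600000)*r^2*e^4 + (-92317621351157/45097156608000)*r^2*e^5 + (-298968907/1879048192)*r^2*e^6 + (-6323845898073965034092980531/1127428915200000000000000000)*r^3 + (-94105485031946061087732727/3382286745600000000000000)*r^3*e^1 + (9150434245424815527433/96636764160000000000)*r^3*e^2 + (6570779366479929617/112742891520000000)*r^3*e^3 + (228454778262481/18790481920000)*r^3*e^4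 + (427662630251/422785843200)*r^3*e^5 + (844535/66060288)*r^3*e^6 + (7424096793281103312512730313/3523215360000000000000000000)*r^4 + (-156152401039840359737639659/1761607680000000000000000)*r^4*e^1 + (-37457327926099065002797/528482304000000000000)*r^4*e^2 + (-4348316080865530637/264241152000000000)*r^4*e^3 + (-79455326970199/66060288000000)*r^4*e^4 + (11429171219/165150720000)*r^4*e^5 + (18073/2293760)*r^4*e^6 + (-163934915248543454730991/943718400000000000000000)*r^5 + (61512286681179513280691/3303014400000000000000)*r^5*e^1 + (273995891543967617/110100480000000000)*r^5*e^2 + (-31675638487981/18350080000000)*r^5*e^3 + (-7263093811/13762560000)*r^5*e^4 + (-1625809/34406400)*r^5*e^5 + (-5/10752)*r^5*e^6 + (-37311039432321698830469/322560000000000000000000)*r^6 + (380542810588065224053/107520000000000000000)*r^6*e^1 + (208893577780803323/64512000000000000)*r^6*e^2 + (26034450721883/32256000000000)*r^6*e^3 + (1153715057/16128000000)*r^6*e^4 + (-41417/40320000)*r^6*e^5 + (-1/5040)*r^6*e^6 + (341824533020533009/16128000000000000000)*r^7 + (-825333458447051/806400000000000)*r^7*e^1 + (-65052131143/230400000000)*r^7*e^2 + (6603803/806400000)*r^7*e^3 + (4283/403200)*r^7*e^4 + (1/1008)*r^7*e^5 + (58828730915669/26880000000000000)*r^8 + (-40604913343/640000000000)*r^8*e^1 + (-454908049/6720000000)*r^8*e^2 + (-172931/10080000)*r^8*e^3 + (-1/630)*r^8*e^4 + (-2657244271/3360000000000)*r^9 + (39476089/1680000000)*r^9*e^1 + (6283/840000)*r^9*e^2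 + (1/1260)*r^9*e^3.
Lemma QB2_2_sign r e : 0 <= r <= (15/128) -> 0 <= e <= (1/10000) -> QB2_2 r e > 0.
Proof.
  intros Hr He.
  pose proof (mb r e (15/128) (1/10000) 0 1 Hr He).
  pose proof (mb r e (15/128) (1/10000) 0 2 Hr He).
  pose proof (mb r e (15/128) (1/10000) 0 3 Hr He).
  pose proof (mb r e (15/128) (1/10000) 0 4 Hr He).
  pose proof (mb r e (15/128) (1/10000) 0 5 Hr He).
  pose proof (mb r e (15/128) (1/10000) 0 6 Hr He).
  pose proof (mb r e (15/128) (1/10000) 1 0 Hr He).
  pose proof (mb r e (15/128) (1/10000) 1 1 Hr He).
  pose proof (mb r e (15/128) (1/10000) 1 2 Hr He).
  pose proof (mb r e (15/128) (1/10000) 1 3 Hr He).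
  pose proof (mb r e (15/128) (1/10000) 1 4 Hr He).
  pose proof (mb r e (15/128) (1/10000) 1 5 Hr He).
  pose proof (mb r e (15/128) (1/10000) 1 6 Hr He).
  pose proof (mb r e (15/128) (1/10000) 2 0 Hr He).
  pose proof (mb r e (15/128) (1/10000) 2 1 Hr He).
  pose proof (mb r e (15/128) (1/10000) 2 2 Hr He).
  pose proof (mb r e (15/128) (1/10000) 2 3 Hr He).
  pose proof (mb r e (15/128) (1/10000) 2 4 Hr He).
  pose proof (mb r e (15/128) (1/10000) 2 5 Hr He).
  pose proof (mb r e (15/128) (1/10000) 2 6 Hr He).
  pose proof (mb r e (15/128) (1/10000) 3 0 Hr He).
  pose proof (mb r e (15/128) (1/10000) 3 1 Hr He).
  pose proof (mb r e (15/128) (1/10000) 3 2 Hr He).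
  pose proof (mb r e (15/128) (1/10000) 3 3 Hr He).
  pose proof (mb r e (15/128) (1/10000) 3 4 Hr He).
  pose proof (mb r e (15/128) (1/10000) 3 5 Hr He).
  pose proof (mb r e (15/128) (1/10000) 3 6 Hr He).
  pose proof (mb r e (15/128) (1/10000) 4 0 Hr He).
  pose proof (mb r e (15/128) (1/10000) 4 1 Hr He).
  pose proof (mb r e (15/128) (1/10000) 4 2 Hr He).
  pose proof (mb r e (15/128) (1/10000) 4 3 Hr He).
  pose proof (mb r e (15/128) (1/10000) 4 4 Hr He).
  pose proof (mb r e (15/128) (1/10000) 4 5 Hr He).
  pose proof (mb r e (15/128) (1/10000) 4 6 Hr He).
  pose proof (mb r e (15/128) (1/10000) 5 0 Hr He).
  pose proof (mb r e (15/128) (1/10000) 5 1 Hr He).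
  pose proof (mb r e (15/128) (1/10000) 5 2 Hr He).
  pose proof (mb r e (15/128) (1/10000) 5 3 Hr He).
  pose proof (mb r e (15/128) (1/10000) 5 4 Hr He).
  pose proof (mb r e (15/128) (1/10000) 5 5 Hr He).
  pose proof (mb r e (15/128) (1/10000) 5 6 Hr He).
  pose proof (mb r e (15/128) (1/10000) 6 0 Hr He).
  pose proof (mb r e (15/128) (1/10000) 6 1 Hr He).
  pose proof (mb r e (15/128) (1/10000) 6 2 Hr He).
  pose proof (mb r e (15/128) (1/10000) 6 3 Hr He).
  pose proof (mb r e (15/128) (1/10000) 6 4 Hr He).
  pose proof (mb r e (15/128) (1/10000) 6 5 Hr He).
  pose proof (mb r e (15/128) (1/10000) 6 6 Hr He).
  pose proof (mb r e (15/128) (1/10000) 7 0 Hr He).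
  pose proof (mb r e (15/128) (1/10000) 7 1 Hr He).
  pose proof (mb r e (15/128) (1/10000) 7 2 Hr He).
  pose proof (mb r e (15/128) (1/10000) 7 3 Hr He).
  pose proof (mb r e (15/128) (1/10000) 7 4 Hr He).
  pose proof (mb r e (15/128) (1/10000) 7 5 Hr He).
  pose proof (mb r e (15/128) (1/10000) 8 0 Hr He).
  pose proof (mb r e (15/128) (1/10000) 8 1 Hr He).
  pose proof (mb r e (15/128) (1/10000) 8 2 Hr He).
  pose proof (mb r e (15/128) (1/10000) 8 3 Hr He).
  pose proof (mb r e (15/128) (1/10000) 8 4 Hr He).
  pose proof (mb r e (15/128) (1/10000) 9 0 Hr He).
  pose proof (mb r e (15/128) (1/10000) 9 1 Hr He).
  pose proof (mb r e (15/128) (1/10000) 9 2 Hr He).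
  pose proof (mb r e (15/128) (1/10000) 9 3 Hr He).
  unfold QB2_2; lra.
Qed.
Lemma QB2_2_eq u e : QB2E u e = QB2_2 (u - (25/64)) e.
Proof. unfold QB2E, QB2_2; lra. Qed.
Definition QB2_3 (r e : R) : R := (22924305276485102906774869306818222899/36317027395115679744000000000000000000) + (9111897592652416971043858734698665243/18158513697557839872000000000000000)*e^1 + (1318274336723732369805258690175373/1815851369755783987200000000000)*e^2 + (371181928130994726733531769933/907925684877891993600000000)*e^3 + (1596415700203919539265051/14186338826217062400000)*e^4 + (1107806710485773128813/70931694131085312000)*e^5 + (4245137015721907/4433230883192832)*e^6 + (-23539767492101105963141651068993463/8106479329266892800000000000000000)*r^1 + (-4029153527277392593421493722305391/4053239664633446400000000000000)*r^1*e^1 + (-3219693854499796669775090135407/2837267765243412480000000000)*r^1*e^2 + (-223186813734111650997326149/472877960873902080000000)*r^1*e^3 + (-1303466930156548192081/14777436277309440000)*r^1*e^4 + (-828805581148269617/110830772079820800)*r^1*e^5 + (-952140164365/5772436045824)*r^1*e^6 + (2898993676166106726892091062013191/554153860399104000000000000000000)*r^2 + (172354058142259981441893084416887/277076930199552000000000000000)*r^2*e^1 + (1402169901037016542799419173/3078632557772800000000000)*r^2*e^2 + (1278147762742773844597597/13853846509977600000000)*r^2*e^3 + (2030443970703726247/1731730813747200000)*r^2*e^4 + (-2433840673751269/1443109011456000)*r^2*e^5 + (-4629099947/30064771072)*r^2*e^6 + (-6708689736386432213363372364959/1443109011456000000000000000000)*r^3 + (-20629054094663604851116740427/309237645312000000000000000)*r^3*e^1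 + (13401283936541527369902521/216466351718400000000000)*r^3*e^2 + (1816743176316948856547/36077725286400000000)*r^3*e^3 + (51970427880451447/4509715660800000)*r^3*e^4 + (35089829867479/33822867456000)*r^3*e^5 + (8671039/528482304)*r^3*e^6 + (31935265858573769115611843413/16106127360000000000000000000)*r^4 + (-1447982873308232672888096071/18790481920000000000000000)*r^4*e^1 + (-1162978321109191934258129/16911433728000000000000)*r^4*e^2 + (-146290672657301809009/8455716864000000000)*r^4*e^3 + (-790969518233717/528482304000000)*r^4*e^4 + (54646930627/1321205760000)*r^4*e^5 + (69417/9175040)*r^4*e^6 + (-131461322550794811677552123/528482304000000000000000000)*r^5 + (5499203559730050167696989/264241152000000000000000)*r^5*e^1 + (41204084565953968993/8808038400000000000)*r^5*e^2 + (-242817670455907/209715200000000)*r^5*e^3 + (-130613454911/275251200000)*r^5*e^4 + (-32816309/688128000)*r^5*e^5 + (-13/21504)*r^5*e^6 + (-1006912461111594217615633/10321920000000000000000000)*r^6 + (4607847018038343787973/1720320000000000000000)*r^6*e^1 + (1538703172822179709/516096000000000000)*r^6*e^2 + (208334500078189/258048000000000)*r^6*e^3 + (2568814489/32256000000)*r^6*e^4 + (-17209/80640000)*r^6*e^5 + (-1/5040)*r^6*e^6 + (421268490225358421/18432000000000000000)*r^7 + (-13822882421913641/12902400000000000)*r^7*e^1 + (-2207021150479/6451200000000)*r^7*e^2 + (-24198463/3225600000)*r^7*e^3 + (3683/403200)*r^7*e^4 + (1/1008)*r^7*e^5 + (72816464758213/53760000000000000)*r^8 + (-346415786177/8960000000000)*r^8*e^1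 + (-803790473/13440000000)*r^8*e^2 + (-328987/20160000)*r^8*e^3 + (-1/630)*r^8*e^4 + (-2657244271/3360000000000)*r^9 + (39476089/1680000000)*r^9*e^1 + (6283/840000)*r^9*e^2 + (1/1260)*r^9*e^3.
Lemma QB2_3_sign r e : 0 <= r <= (15/128) -> 0 <= e <= (1/10000) -> QB2_3 r e > 0.
Proof.
  intros Hr He.
  pose proof (mb r e (15/128) (1/10000) 0 1 Hr He).
  pose proof (mb r e (15/128) (1/10000) 0 2 Hr He).
  pose proof (mb r e (15/128) (1/10000) 0 3 Hr He).
  pose proof (mb r e (15/128) (1/10000) 0 4 Hr He).
  pose proof (mb r e (15/128) (1/10000) 0 5 Hr He).
  pose proof (mb r e (15/128) (1/10000) 0 6 Hr He).
  pose proof (mb r e (15/128) (1/10000) 1 0 Hr He).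
  pose proof (mb r e (15/128) (1/10000) 1 1 Hr He).
  pose proof (mb r e (15/128) (1/10000) 1 2 Hr He).
  pose proof (mb r e (15/128) (1/10000) 1 3 Hr He).
  pose proof (mb r e (15/128) (1/10000) 1 4 Hr He).
  pose proof (mb r e (15/128) (1/10000) 1 5 Hr He).
  pose proof (mb r e (15/128) (1/10000) 1 6 Hr He).
  pose proof (mb r e (15/128) (1/10000) 2 0 Hr He).
  pose proof (mb r e (15/128) (1/10000) 2 1 Hr He).
  pose proof (mb r e (15/128) (1/10000) 2 2 Hr He).
  pose proof (mb r e (15/128) (1/10000) 2 3 Hr He).
  pose proof (mb r e (15/128) (1/10000) 2 4 Hr He).
  pose proof (mb r e (15/128) (1/10000) 2 5 Hr He).
  pose proof (mb r e (15/128) (1/10000) 2 6 Hr He).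
  pose proof (mb r e (15/128) (1/10000) 3 0 Hr He).
  pose proof (mb r e (15/128) (1/10000) 3 1 Hr He).
  pose proof (mb r e (15/128) (1/10000) 3 2 Hr He).
  pose proof (mb r e (15/128) (1/10000) 3 3 Hr He).
  pose proof (mb r e (15/128) (1/10000) 3 4 Hr He).
  pose proof (mb r e (15/128) (1/10000) 3 5 Hr He).
  pose proof (mb r e (15/128) (1/10000) 3 6 Hr He).
  pose proof (mb r e (15/128) (1/10000) 4 0 Hr He).
  pose proof (mb r e (15/128) (1/10000) 4 1 Hr He).
  pose proof (mb r e (15/128) (1/10000) 4 2 Hr He).
  pose proof (mb r e (15/128) (1/10000) 4 3 Hr He).
  pose proof (mb r e (15/128) (1/10000) 4 4 Hr He).
  pose proof (mb r e (15/128) (1/10000) 4 5 Hr He).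
  pose proof (mb r e (15/128) (1/10000) 4 6 Hr He).
  pose proof (mb r e (15/128) (1/10000) 5 0 Hr He).
  pose proof (mb r e (15/128) (1/10000) 5 1 Hr He).
  pose proof (mb r e (15/128) (1/10000) 5 2 Hr He).
  pose proof (mb r e (15/128) (1/10000) 5 3 Hr He).
  pose proof (mb r e (15/128) (1/10000) 5 4 Hr He).
  pose proof (mb r e (15/128) (1/10000) 5 5 Hr He).
  pose proof (mb r e (15/128) (1/10000) 5 6 Hr He).
  pose proof (mb r e (15/128) (1/10000) 6 0 Hr He).
  pose proof (mb r e (15/128) (1/10000) 6 1 Hr He).
  pose proof (mb r e (15/128) (1/10000) 6 2 Hr He).
  pose proof (mb r e (15/128) (1/10000) 6 3 Hr He).
  pose proof (mb r e (15/128) (1/10000) 6 4 Hr He).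
  pose proof (mb r e (15/128) (1/10000) 6 5 Hr He).
  pose proof (mb r e (15/128) (1/10000) 6 6 Hr He).
  pose proof (mb r e (15/128) (1/10000) 7 0 Hr He).
  pose proof (mb r e (15/128) (1/10000) 7 1 Hr He).
  pose proof (mb r e (15/128) (1/10000) 7 2 Hr He).
  pose proof (mb r e (15/128) (1/10000) 7 3 Hr He).
  pose proof (mb r e (15/128) (1/10000) 7 4 Hr He).
  pose proof (mb r e (15/128) (1/10000) 7 5 Hr He).
  pose proof (mb r e (15/128) (1/10000) 8 0 Hr He).
  pose proof (mb r e (15/128) (1/10000) 8 1 Hr He).
  pose proof (mb r e (15/128) (1/10000) 8 2 Hr He).
  pose proof (mb r e (15/128) (1/10000) 8 3 Hr He).
  pose proof (mb r e (15/128) (1/10000) 8 4 Hr He).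
  pose proof (mb r e (15/128) (1/10000) 9 0 Hr He).
  pose proof (mb r e (15/128) (1/10000) 9 1 Hr He).
  pose proof (mb r e (15/128) (1/10000) 9 2 Hr He).
  pose proof (mb r e (15/128) (1/10000) 9 3 Hr He).
  unfold QB2_3; lra.
Qed.
Lemma QB2_3_eq u e : QB2E u e = QB2_3 (u - (65/128)) e.
Proof. unfold QB2E, QB2_3; lra. Qed.
Lemma QB2_sign u p : 0 <= u <= (5/8) -> (6283/2000) <= p <= (3927/1250) -> QB2 u p > 0.
Proof.
  intros Hu Hp.
  assert (He : 0 <= p - (6283/2000) <= (1/10000)) by lra.
  rewrite QB2E_eq.
  destruct (Rle_lt_dec u (5/32)) as [Hk|Hk].
  {
    rewrite QB2_0_eq; apply QB2_0_sign; [lra|exact He].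
  }
  assert (Hlo0 : (5/32) < u) by lra. clear Hk.
  destruct (Rle_lt_dec u (25/64)) as [Hk|Hk].
  {
    rewrite QB2_1_eq; apply QB2_1_sign; [lra|exact He].
  }
  assert (Hlo1 : (25/64) < u) by lra. clear Hk.
  destruct (Rle_lt_dec u (65/128)) as [Hk|Hk].
  {
    rewrite QB2_2_eq; apply QB2_2_sign; [lra|exact He].
  }
  assert (Hlo2 : (65/128) < u) by lra. clear Hk.
  {
    rewrite QB2_3_eq; apply QB2_3_sign; [lra|exact He].
  }
Qed.


Lemma INR_fact_S n : INR (fact (S n)) = INR (S n) * INR (fact n).
Proof. rewrite fact_simpl, mult_INR; reflexivity. Qed.

Lemma pi_bounds : 6283/2000 <= PI <= 6283/2000 + 1/10000.
Proof.
  destruct (PI_2_3_7_ineq 4) as [H1 H2].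
  unfold tg_alt, PI_2_3_7_tg, Ratan_seq in H1, H2. simpl in H1, H2.
  lra.
Qed.

Definition CU x := 1 - x^2/2 + x^4/24 - x^6/720 + x^8/40320.
Definition CL x := 1 - x^2/2 + x^4/24 - x^6/720.
Definition SU x := x - x^3/6 + x^5/120 - x^7/5040 + x^9/362880.
Definition SL x := x - x^3/6 + x^5/120 - x^7/5040.

Lemma cos4 x : cos_approx x 4 = CU x.
Proof.
  unfold CU; cbv [cos_approx cos_term sum_f_R0]. cbv [Nat.mul Nat.add].
  repeat rewrite INR_fact_S. cbv [fact]. rewrite !S_INR. simpl INR. field.
Qed.
Lemma cos3 x : cos_approx x 3 = CL x.
Proof.
  unfold CL; cbv [cos_approx cos_term sum_f_R0]. cbv [Nat.mul Nat.add].
  repeat rewrite INR_fact_S. cbv [fact]. rewrite !S_INR. simpl INR. field.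
Qed.
Lemma sin4 x : sin_approx x 4 = SU x.
Proof.
  unfold SU; cbv [sin_approx sin_term sum_f_R0]. cbv [Nat.mul Nat.add].
  repeat rewrite INR_fact_S. cbv [fact]. rewrite !S_INR. simpl INR. field.
Qed.
Lemma sin3 x : sin_approx x 3 = SL x.
Proof.
  unfold SL; cbv [sin_approx sin_term sum_f_R0]. cbv [Nat.mul Nat.add].
  repeat rewrite INR_fact_S. cbv [fact]. rewrite !S_INR. simpl INR. field.
Qed.

Definition N1p x p := p^5 + (28-8*p)*p^2*x^2 + (16*p-48)*x^4.
Definition N2p x p := 2*p^5 - (8-p^2)*p^3*x^2 - (4*p^3-128)*x^4.
Definition Dp x p := p^2 - 4*x^2.

Lemma pA1 x p : 0 < x <= 1 -> 6283/2000 <= p <= 6283/2000 + 1/10000 ->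
  CU x * N1p x p < p^3 * Dp x p.
Proof.
  intros Hx Hp.
  assert (E : CU x * N1p x p - p^3 * Dp x p = x^2 * QA1 (x^2) p)
    by (unfold CU, N1p, Dp, QA1; lra).
  assert (Q : QA1 (x^2) p < 0).
  { apply QA1_sign; [|lra]. split; [nra|]. assert (x*x <= 1) by nra. simpl; lra. }
  assert (0 < x^2 * - QA1 (x^2) p) by (apply Rmult_lt_0_compat; [nra|lra]).
  lra.
Qed.
Lemma pA2 x p : 0 < x <= 1 -> 6283/2000 <= p <= 6283/2000 + 1/10000 ->
  2 * p^3 * Dp x p < CL x * N2p x p.
Proof.
  intros Hx Hp.
  assert (E : CL x * N2p x p - 2 * p^3 * Dp x p = x^4 * QA2 (x^2) p)
    by (unfold CL, N2p, Dp, QA2; lra).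
  assert (Q : QA2 (x^2) p > 0).
  { apply QA2_sign; [|lra]. split; [nra|]. assert (x*x <= 1) by nra. simpl; lra. }
  assert (0 < x^4 * QA2 (x^2) p) by (apply Rmult_lt_0_compat; [apply pow_lt; lra|lra]).
  lra.
Qed.
Lemma pB1 x p : 0 < p/2 - x <= 5/8 -> 6283/2000 <= p <= 6283/2000 + 1/10000 ->
  SU (p/2 - x) * N1p x p < p^3 * Dp x p.
Proof.
  intros Hx Hp.
  assert (E : SU (p/2 - x) * N1p x p - p^3 * Dp x p = (p/2 - x)^3 * QB1 (p/2 - x) p)
    by (unfold SU, N1p, Dp, QB1; lra).
  assert (Q : QB1 (p/2 - x) p < 0) by (apply QB1_sign; lra).
  assert (0 < (p/2 - x)^3 * - QB1 (p/2 - x) p) by (apply Rmult_lt_0_compat; [apply pow_lt; lra|lra]).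
  lra.
Qed.
Lemma pB2 x p : 0 < p/2 - x <= 5/8 -> 6283/2000 <= p <= 6283/2000 + 1/10000 ->
  2 * p^3 * Dp x p < SL (p/2 - x) * N2p x p.
Proof.
  intros Hx Hp.
  assert (E : SL (p/2 - x) * N2p x p - 2 * p^3 * Dp x p = (p/2 - x)^2 * QB2 (p/2 - x) p)
    by (unfold SL, N2p, Dp, QB2; lra).
  assert (Q : QB2 (p/2 - x) p > 0) by (apply QB2_sign; lra).
  assert (0 < (p/2 - x)^2 * QB2 (p/2 - x) p) by (apply Rmult_lt_0_compat; [apply pow_lt; lra|lra]).
  lra.
Qed.

Lemma div_lt_inv N D c : 0 < D -> 0 < c -> N * c < D -> N / D < / c.
Proof.
  intros HD Hc H.
  replace (N / D) with ((N * c) * / (D * c)) by (field; lra).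
  replace (/ c) with (D * / (D * c)) by (field; lra).
  apply Rmult_lt_compat_r; [|exact H].
  apply Rinv_0_lt_compat; apply Rmult_lt_0_compat; lra.
Qed.
Lemma inv_lt_div N D c : 0 < D -> 0 < c -> D < N * c -> / c < N / D.
Proof.
  intros HD Hc H.
  replace (N / D) with ((N * c) * / (D * c)) by (field; lra).
  replace (/ c) with (D * / (D * c)) by (field; lra).
  apply Rmult_lt_compat_r; [|exact H].
  apply Rinv_0_lt_compat; apply Rmult_lt_0_compat; lra.
Qed.

Lemma aux x : 0 < x < PI / 2 ->
  (PI ^ 2 + (28 - 8 * PI) / PI * x ^ 2 + (16 * PI - 48) / PI ^ 3 * x ^ 4)
    / (PI ^ 2 - 4 * x ^ 2) < / cos x /\
  / cos x < (PI ^ 2 - (8 - PI ^ 2) / 2 * x ^ 2 - (4 * PI ^ 3 - 128) / (2 * PI ^ 3) * x ^ 4)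
    / (PI ^ 2 - 4 * x ^ 2).
Proof.
  intros Hx.
  pose proof pi_bounds as Hp.
  set (p := PI) in *.
  assert (Hc : 0 < cos x) by (apply cos_gt_0; unfold p in *; lra).
  assert (HD : 0 < p ^ 2 - 4 * x ^ 2).
  { assert (0 < p - 2*x) by lra. assert (0 < p + 2*x) by lra.
    replace (p^2 - 4*x^2) with ((p - 2*x)*(p+2*x)) by ring.
    apply Rmult_lt_0_compat; lra. }
  assert (Hp3 : 0 < p^3) by (apply pow_lt; lra).
  assert (E1 : p^3 * (p ^ 2 + (28 - 8 * p) / p * x ^ 2 + (16 * p - 48) / p ^ 3 * x ^ 4) = N1p x p)
    by (unfold N1p; field; lra).
  assert (E2 : 2 * p^3 * (p ^ 2 - (8 - p ^ 2) / 2 * x ^ 2 - (4 * p ^ 3 - 128) / (2 * p ^ 3) * x ^ 4) = N2p x p)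
    by (unfold N2p; field; lra).
  assert (Hx2 : 0 <= x^2) by (apply pow_le; lra).
  assert (Hx4 : 0 <= x^4) by (apply pow_le; lra).
  assert (HN1 : 0 < N1p x p).
  { unfold N1p.
    assert (0 <= (28 - 8*p) * p^2 * x^2).
    { apply Rmult_le_pos; [apply Rmult_le_pos; [lra| apply pow_le; lra]| lra]. }
    assert (0 <= (16*p - 48) * x^4) by (apply Rmult_le_pos; lra).
    assert (0 < p^5) by (apply pow_lt; lra). lra. }
  assert (HN2 : 0 < N2p x p).
  { unfold N2p.
    assert (0 <= (p^2 - 8) * p^3 * x^2).
    { apply Rmult_le_pos; [apply Rmult_le_pos; [nra| lra]| lra]. }
    assert (0 <= (128 - 4*p^3) * x^4).
    { apply Rmult_le_pos; [|lra]. assert (p^3 <= 32) by (simpl; nra). lra. }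
    assert (0 < p^5) by (apply pow_lt; lra). lra. }
  assert (Key : (p ^ 2 + (28 - 8 * p) / p * x ^ 2 + (16 * p - 48) / p ^ 3 * x ^ 4) * cos x < p ^ 2 - 4 * x ^ 2 /\
               p ^ 2 - 4 * x ^ 2 < (p ^ 2 - (8 - p ^ 2) / 2 * x ^ 2 - (4 * p ^ 3 - 128) / (2 * p ^ 3) * x ^ 4) * cos x).
  { assert (L : cos x * N1p x p < p^3 * Dp x p /\ 2 * p^3 * Dp x p < cos x * N2p x p).
    { destruct (Rle_lt_dec x 1) as [H1|H1].
      - destruct (cos_bound x 1) as [Cl Cu]; try (unfold p in *; lra).
        simpl in Cl, Cu. rewrite cos3 in Cl. rewrite cos4 in Cu.
        split.
        + apply Rle_lt_trans with (CU x * N1p x p).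
          * apply Rmult_le_compat_r; lra.
          * apply pA1; lra.
        + apply Rlt_le_trans with (CL x * N2p x p).
          * apply pA2; lra.
          * apply Rmult_le_compat_r; lra.
      - assert (Hy : 0 < p/2 - x <= 5/8) by lra.
        rewrite <- (sin_shift x). fold p.
        destruct (sin_bound (p/2 - x) 1) as [Sl Su]; try (unfold p in *; lra).
        simpl in Sl, Su. rewrite sin3 in Sl. rewrite sin4 in Su.
        split.
        + apply Rle_lt_trans with (SU (p/2 - x) * N1p x p).
          * apply Rmult_le_compat_r; lra.
          * apply pB1; lra.
        + apply Rlt_le_trans with (SL (p/2 - x) * N2p x p).
          * apply pB2; lra.
          * apply Rmult_le_compat_r; lra. }
    destruct L as [L1 L2]. unfold Dp in L1, L2.
    rewrite <- E1 in L1. rewrite <- E2 in L2. split.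
    - apply (Rmult_lt_reg_l (p^3)); [exact Hp3|]. lra.
    - apply (Rmult_lt_reg_l (2 * p^3)); [lra|]. lra. }
  destruct Key as [K1 K2]. split.
  - apply div_lt_inv; assumption.
  - apply inv_lt_div; assumption.
Qed.

Theorem mainTheorem17 (t : R) (ht0 : 0 < Rabs t) (ht1 : Rabs t < PI / 2) :
  (PI ^ 2 + (28 - 8 * PI) / PI * t ^ 2 + (16 * PI - 48) / PI ^ 3 * t ^ 4)
    / (PI ^ 2 - 4 * t ^ 2) < sec t /\
  sec t < (PI ^ 2 - (8 - PI ^ 2) / 2 * t ^ 2 - (4 * PI ^ 3 - 128) / (2 * PI ^ 3) * t ^ 4)
    / (PI ^ 2 - 4 * t ^ 2).
Proof.
  assert (E2 : t^2 = Rabs t ^ 2) by (rewrite pow2_abs; reflexivity).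
  assert (E4 : t^4 = Rabs t ^ 4).
  { replace (t^4) with ((t^2)^2) by ring. replace (Rabs t ^ 4) with ((Rabs t ^ 2)^2) by ring.
    rewrite E2; reflexivity. }
  assert (Ec : cos t = cos (Rabs t)).
  { destruct (Rcase_abs t) as [H|H].
    - rewrite (Rabs_left t H), cos_neg; reflexivity.
    - rewrite (Rabs_right t H); reflexivity. }
  unfold sec. rewrite E2, E4, Ec.
  apply aux; lra.
Qed.
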